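(* Let $k$ be a field, $E$ a $k$-vector space of dimension $n$, and $f\in\operatorname{End}_k(E)$ an endomorphism with annihilating (minimal) polynomial $x^n$. Let $e\in E$ be a vector with $f^{n-1}(e)\neq 0$. Then the generalized inverses $g\in\operatorname{End}_k(E)$ of $f$ are exactly the linear maps determined by $$g(f^i(e))=\begin{cases} f^{i-1}(e)+\lambda_i f^{n-1}(e) & \text{if } 1\le i\le n-1,\\ \tilde e & \text{if } i=0,\end{cases}$$ where $\lambda_1,\dots,\lambda_{n-1}\in k$ are arbitrary scalars and $\tilde e\in E$ is an arbitrary vector.
   Context: A generalized inverse of an endomorphism $f$ of $E$ is an endomorphism $g$ of $E$ with $f\circ g\circ f=f$. Here $\{e,f(e),\dots,f^{n-1}(e)\}$ is a basis of $E$. *)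

(* Defs.v *)
From HB Require Import structures.
From mathcomp Require Import all_boot all_order all_algebra.
Set Implicit Arguments. Unset Strict Implicit. Unset Printing Implicit Defensive.
Import GRing.Theory.
Local Open Scope ring_scope.

Definition lfun_pow (k : fieldType) (E : vectType k) (f : 'End(E)) (i : nat) : 'End(E) :=
  iter i (fun h => (f \o h)%VF) \1%VF.

Definition lfun_horner (k : fieldType) (E : vectType k) (p : {poly k}) (f : 'End(E)) : 'End(E) :=
  \sum_(i < size p) p`_i *: lfun_pow f i.

Definition lfun_minpoly (k : fieldType) (E : vectType k) (f : 'End(E)) (p : {poly k}) : Prop :=
  [/\ p \is monic, lfun_horner p f = 0 &
      forall q : {poly k}, lfun_horner q f = 0 -> p %| q].

Definition gen_inverse (k : fieldType) (E : vectType k) (f g : 'End(E)) : Prop :=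
  (f \o g \o f)%VF = f.

(* Main.v *)
Require Import Defs.
From HB Require Import structures.
From mathcomp Require Import all_boot all_order all_algebra.
From mathcomp Require Import zify.
Import GRing.Theory.
Local Open Scope ring_scope.

Lemma iter_lp (k : fieldType) (E : vectType k) (f : 'End(E)) i v :
  iter i f v = lfun_pow f i v.
Proof.
elim: i => [|i IH] /=; first by rewrite id_lfunE.
by rewrite comp_lfunE IH.
Qed.

Lemma nilp (k : fieldType) (E : vectType k) (f : 'End(E)) n :
  lfun_minpoly f 'X^n -> forall j v, (n <= j)%N -> iter j f v = 0.
Proof.
case=> _ h _ j v lenj.
have h0 : forall w, iter n f w = 0.
  move=> w; rewrite iter_lp.
  move: h; rewrite /lfun_horner size_polyXn big_ord_recr /=.
  rewrite big1 ?add0r; last by move=> i _; rewrite coefXn (ltn_eqF (ltn_ord i)) scale0r.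
  by rewrite coefXn eqxx scale1r => ->; rewrite zero_lfunE.
by rewrite -(subnK lenj) iterD h0 iter_lp linear0.
Qed.
Arguments nilp {k E f n}.

Lemma freeL (k : fieldType) (E : vectType k) (f : 'End(E)) m (e : E) :
  lfun_minpoly f 'X^(m.+1) -> iter m f e != 0 ->
  forall c : nat -> k, \sum_(i < m.+1) c i *: iter i f e = 0 ->
  forall j, (j < m.+1)%N -> c j = 0.
Proof.
move=> hmin he c hs j; elim/ltn_ind: j => j IH ltj.
have := congr1 (lfun_pow f (m - j)) hs.
rewrite linear0 linear_sum (bigD1 (Ordinal ltj)) //= big1 ?addr0.
  rewrite linearZ /= -iter_lp -iterD (subnK (ltnSE ltj)) => /eqP.
  by rewrite scaler_eq0 (negPf he) orbF => /eqP.
move=> i /= ni; rewrite linearZ /= -iter_lp.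
case: (ltngtP i j) => [lij|lji|eij]; last by case/eqP: ni; apply: val_inj.
- by rewrite (IH i) ?scale0r.
- by rewrite -iterD (nilp hmin) ?scaler0 //; lia.
Qed.
Arguments freeL {k E f m e}.

Theorem lemma3p7 (k : fieldType) (E : vectType k) (n : nat)
  (hdim : \dim (fullv : {vspace E}) = n)
  (f : 'End(E)) (hmin : lfun_minpoly f 'X^n)
  (e : E) (he : iter n.-1 f e != 0) (g : 'End(E)) :
  gen_inverse f g <->
  exists (lam : nat -> k) (et : E),
    g e = et /\
    (forall i : nat, (1 <= i <= n - 1)%N ->
       g (iter i f e) = iter i.-1 f e + lam i *: iter n.-1 f e).
Proof.
case: n hdim hmin he => [|m] hdim hmin he.
  exfalso; move/eqP: hdim; rewrite dimv_eq0 => /eqP h0.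
  have : e \in (0 : {vspace E})%VS by rewrite -h0 memvf.
  by rewrite memv0 => /eqP e0; rewrite /= e0 eqxx in he.
set X := [tuple iter i f e | i < m.+1].
have Xi : forall i : 'I_m.+1, X`_i = iter i f e by move=> i; rewrite nth_mktuple.
have freeX : free X.
  apply/freeP => c hc i.
  have := freeL hmin he (fun j => c (inord j)) _ i (ltn_ord i).
  rewrite inord_val; apply; rewrite -[RHS]hc; apply: eq_bigr => j _.
  by rewrite inord_val Xi.
have spanX : <<X>>%VS = fullv.
  by apply/eqP; rewrite eqEdim subvf /= hdim (eqP freeX) size_tuple.
have dec : forall v, v = \sum_(i < m.+1) coord X (inord i) v *: iter i f e.
  move=> v; rewrite {1}(coord_span (v:=v) (X:=X)) ?spanX ?memvf //.
  by apply: eq_bigr => i _; rewrite inord_val Xi.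
have ker : forall v, f v = 0 -> v = coord X (inord m) v *: iter m f e.
  move=> v fv.
  have c0 : forall i, (i < m)%N -> coord X (inord i) v = 0.
    move=> i lim.
    pose d j := if j is j'.+1 then coord X (inord j') v else 0.
    apply: (freeL hmin he d _ i.+1 lim).
    rewrite big_ord_recl /= scale0r add0r.
    have := congr1 f (dec v).
    rewrite fv linear_sum big_ord_recr /= linearZ /= -iterS (nilp hmin) // scaler0 addr0 => h.
    apply: (eq_trans _ (esym h)).
    by apply: eq_bigr => j _; rewrite add0n linearZ /= -iterS.
  rewrite {1}(dec v) big_ord_recr /= big1 ?add0r // => i _.
  by rewrite c0 ?scale0r.
split.
  move=> hg.
  have hfgf : forall v, f (g (f v)) = f v.
    by move=> v; have := congr1 (fun h : 'End(E) => h v) hg; rewrite /= !comp_lfunE.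
  exists (fun i => coord X (inord m) (g (iter i f e) - iter i.-1 f e)), (g e).
  split => // i /andP [i1 _].
  rewrite -(ker (g (iter i f e) - iter i.-1 f e)) ?[_ + (_ - _)]addrC ?subrK //.
  have -> : iter i f e = f (iter i.-1 f e) by rewrite -iterS prednK.
  by rewrite linearB /= hfgf subrr.
case=> lam [et [_ hl]].
apply/lfunP => v; rewrite !comp_lfunE (dec v) !linear_sum.
apply: eq_bigr => i _; rewrite !linearZ /=; congr (_ *: _).
rewrite -iterS; case: (ltnP i m) => lim.
  rewrite hl; last by apply/andP; split => //; rewrite subn1.
  by rewrite linearD linearZ /= -!iterS (nilp hmin (m.+1)) // scaler0 addr0.
have -> : (i : nat) = m by apply/eqP; rewrite eqn_leq lim -ltnS ltn_ord andbT.
by rewrite (nilp hmin) // !linear0.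
Qed.
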